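(* Let $n\ge1$, $k=\lfloor n/2\rfloor$, let $(p_j,u_j)$, $0\le j\le n$, be the coordinates of the trajectory $T_n$, and put $\lambda_j=1-u_j$. Then, with $\delta=1-(p_k-1)^2$, $$C_n=2\sum_{j=0}^{k-1}\bigl(3-p_j+u_j-2u_{j+1}-p_ju_j\bigr)+\delta=2\sum_{j=1}^{k}\frac{\lambda_j(\lambda_{j-1}-2\lambda_j)}{u_j}+\delta.$$
   Context: For $n\ge1$ and $\mathbf{x}=(x_1,\dots,x_n)\in(0,\infty)^n$ let $f_n(\mathbf{x})=\sum_{i=1}^n x_i+\sum_{1\le i\le j\le n}\prod_{k=i}^j \frac1{x_k}$, $A_n=\inf_{\mathbf{x}\in(0,\infty)^n} f_n(\mathbf{x})$, and $C_n=3n-A_n$. Let $\Phi$ be the partial map of $\mathbb{R}^2$ defined for $p\ne0$ by $\Phi(p,u)=\bigl(p^2(u+1)-1,\ 1/p\bigr)$. For $n\ge1$, the trajectory $T_n$ is the (existing and unique) finite sequence $(p_j,u_j)$, $j=0,\dots,n$, with $(p_j,u_j)=\Phi(p_{j-1},u_{j-1})$ for $1\le j\le n$, $u_0=0$, $p_n=0$, and $p_j>0$ for $0\le j\le n-1$. *)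

(* Defs.v *)
From HB Require Import structures.
From mathcomp Require Import all_boot all_order all_algebra.
From mathcomp Require Import boolp classical_sets reals.
Set Implicit Arguments. Unset Strict Implicit. Unset Printing Implicit Defensive.
Import Order.TTheory GRing.Theory Num.Theory.
Local Open Scope ring_scope.
Local Open Scope classical_set_scope.

Definition fn (R : realType) (n : nat) (x : 'I_n -> R) : R :=
  \sum_(i < n) x i +
  \sum_(i < n) \sum_(j < n | (i <= j)%N)
     \prod_(k < n | (i <= k <= j)%N) (x k)^-1.

Definition An (R : realType) (n : nat) : R :=
  inf [set fn x | x in [set x : 'I_n -> R | forall i, 0 < x i]].

Definition Cn (R : realType) (n : nat) : R := 3 * n%:R - An R n.

Definition Phi (R : realType) (z : R * R) : R * R :=
  (z.1 ^+ 2 * (z.2 + 1) - 1, 1 / z.1).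

Definition is_trajectory (R : realType) (n : nat) (T : nat -> R * R) : Prop :=
  [/\ (T 0%N).2 = 0,
      (forall j, (1 <= j <= n)%N -> (T j.-1).1 != 0 /\ T j = Phi (T j.-1)),
      (T n).1 = 0
    & (forall j, (j < n)%N -> 0 < (T j).1)].

(* Main.v *)
Require Import Defs.
From HB Require Import structures.
From mathcomp Require Import all_boot all_order all_algebra.
From mathcomp Require Import boolp classical_sets reals.
From mathcomp Require Import sequences exp.
From mathcomp Require Import ring lra zify.
Import Order.TTheory GRing.Theory Num.Theory.
Local Open Scope ring_scope.

Module A.
Set Implicit Arguments. Unset Strict Implicit. Unset Printing Implicit Defensive.
Section Traj.
Variable R : realFieldType.
Variable n : nat.
Variables p u : nat -> R.
Hypothesis hu0 : u 0%N = 0.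
Hypothesis hrec : forall j, (j < n)%N -> u j.+1 = (p j)^-1 /\ p j.+1 = p j ^+ 2 * (u j + 1) - 1.
Hypothesis hpn : p n = 0.
Hypothesis hpos : forall j, (j < n)%N -> 0 < p j.

Definition xs k := (1 + u k) * p k.

Lemma u_ge0 j : (j <= n)%N -> 0 <= u j.
Proof.
case: j => [|j] hj; first by rewrite hu0.
by rewrite (hrec hj).1 invr_ge0 ltW // hpos.
Qed.

Lemma xs_pos k : (k < n)%N -> 0 < xs k.
Proof.
move=> hk; rewrite /xs mulr_gt0 ?hpos //.
by have := u_ge0 (ltnW hk); lra.
Qed.

Lemma u_next j : (j < n)%N -> u j.+1 = (1 + u j) / xs j.
Proof.
move=> hj; rewrite (hrec hj).1 /xs.
have := u_ge0 (ltnW hj); have := hpos hj => h1 h2.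
field; apply/andP; split; rewrite gt_eqF //; lra.
Qed.

Lemma p_prev j : (j < n)%N -> p j = (1 + p j.+1) / xs j.
Proof.
move=> hj; rewrite (hrec hj).2 /xs.
have := u_ge0 (ltnW hj); have := hpos hj => h1 h2.
field; apply/andP; split; rewrite gt_eqF //; lra.
Qed.

Definition y k := (xs k)^-1.

Lemma Tsum i : (i <= n)%N -> \sum_(i <= j < n) \prod_(i <= l < j.+1) y l = p i.
Proof.
move=> hi; rewrite -(subKn hi).
have : (n - i <= n)%N by lia.
elim: (n - i)%N => [|d IH] hd.
  by rewrite subn0 big_geq // hpn.
have e : (n - d)%N = (n - d.+1).+1 by lia.
rewrite big_ltn; last by lia.
rewrite big_nat1 -e.
transitivity (y (n - d.+1) * (1 + p (n - d))); last first.
  rewrite e [RHS]p_prev /y; [by rewrite mulrC | lia].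
rewrite -IH; last by lia.
rewrite mulrDr mulr1; congr (_ + _); rewrite mulr_sumr.
apply: eq_big_nat => j /andP [hj1 hj2].
rewrite (big_ltn (m := (n - d.+1)%N)); last by lia.
by rewrite e.
Qed.

Lemma Ssum l : (l < n)%N -> \sum_(0 <= i < l.+1) \prod_(i <= m < l.+1) y m = u l.+1.
Proof.
elim: l => [|l IH] hl.
  by rewrite big_nat1 big_nat1 u_next // hu0 /y addr0 mul1r.
rewrite big_nat_recr //= big_nat1.
rewrite (eq_big_nat _ _ (F2 := fun i => \prod_(i <= m < l.+1) y m * y l.+1)); last first.
  by move=> i /andP [_ hi]; rewrite big_nat_recr // ltnW.
rewrite -big_distrl /= IH; last by lia.
rewrite [RHS]u_next // /y; by rewrite mulrDl mul1r addrC.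
Qed.

Lemma sum_lo (F : nat -> R) b : (b <= n)%N ->
  \sum_(0 <= i < n) (if (i < b)%N then F i else 0) = \sum_(0 <= i < b) F i.
Proof.
move=> hb; rewrite (@big_cat_nat _ _ _ b 0 n) // /=.
rewrite [X in _ + X]big1_seq ?addr0; last first.
  by move=> i /andP [_]; rewrite mem_index_iota => /andP [hi _]; rewrite ltnNge hi.
by apply: eq_big_nat => i /andP [_ ->].
Qed.

Lemma sum_hi (F : nat -> R) a : (a <= n)%N ->
  \sum_(0 <= j < n) (if (a <= j)%N then F j else 0) = \sum_(a <= j < n) F j.
Proof.
move=> ha; rewrite (@big_cat_nat _ _ _ a 0 n) // /=.
rewrite big1_seq ?add0r; last first.
  by move=> i /andP [_]; rewrite mem_index_iota => /andP [_ hi]; rewrite leqNgt hi.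
by apply: eq_big_nat => i /andP [-> _].
Qed.

Lemma Gsum l : (l < n)%N ->
  \sum_(0 <= i < n) \sum_(0 <= j < n)
     (if (i <= l <= j)%N then \prod_(i <= m < j.+1) y m else 0) = xs l.
Proof.
move=> hl.
rewrite (eq_big_nat _ _ (F2 := fun i => (if (i < l.+1)%N then \prod_(i <= m < l.+1) y m else 0) *
   \sum_(0 <= j < n) (if (l <= j)%N then \prod_(l.+1 <= m < j.+1) y m else 0))); last first.
  move=> i _; case: ifP => hi; last first.
    by rewrite mul0r big1 // => j _; rewrite ltnS in hi; rewrite hi.
  rewrite mulr_sumr; apply: eq_bigr => j _.
  rewrite ltnS in hi; rewrite hi /=; case: ifP => hj; last by rewrite mulr0.
  by rewrite (@big_cat_nat _ _ _ l.+1) //; apply: ltnW.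
rewrite -mulr_suml sum_lo // sum_hi; last by lia.
rewrite Ssum // big_ltn // big_geq // Tsum //.
have h1 := hrec hl; have h2 := hpos hl.
rewrite h1.1 h1.2 /xs; field; rewrite gt_eqF //.
Qed.

Lemma sum_mid (F : nat -> R) a b : (a <= b)%N -> (b <= n)%N ->
  \sum_(0 <= i < n) (if (a <= i < b)%N then F i else 0) = \sum_(a <= i < b) F i.
Proof.
move=> hab hb; rewrite (@big_cat_nat _ _ _ b 0 n) //= (@big_cat_nat _ _ _ a 0 b) //=.
rewrite big1_seq ?add0r; last first.
  by move=> i /andP [_]; rewrite mem_index_iota => /andP [_ hi]; rewrite leqNgt hi.
rewrite [X in _ + X]big1_seq ?addr0; last first.
  by move=> i /andP [_]; rewrite mem_index_iota => /andP [hi _]; rewrite ltnNge hi andbF.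
by apply: eq_big_nat => i /andP [-> ->].
Qed.

Lemma exch (t : nat -> R) :
  \sum_(0 <= i < n) \sum_(i <= j < n) (\prod_(i <= m < j.+1) y m) * \sum_(i <= l < j.+1) t l
  = \sum_(0 <= l < n) t l * xs l.
Proof.
transitivity (\sum_(0 <= i < n) \sum_(0 <= j < n) \sum_(0 <= l < n)
   (if (i <= l <= j)%N then \prod_(i <= m < j.+1) y m * t l else 0)).
  apply: eq_big_nat => i /andP [_ hi].
  rewrite -(sum_mid _ (ltnW hi) (leqnn n)).
  apply: eq_big_nat => j /andP [_ hj].
  case: ifP => hij; last first.
    rewrite big1 // => l _; case: ifP => // /andP [h1 h2].
    by move: hij; rewrite (leq_trans h1 h2) hj.
  move/andP: hij => [hij1 hij2].
  rewrite -(sum_mid _ (leqW hij1) hij2) mulr_sumr; apply: eq_bigr => l _.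
  by rewrite ltnS; case: ifP; rewrite ?mulr0.
rewrite (eq_big_nat _ _ (F2 := fun i => \sum_(0 <= l < n) \sum_(0 <= j < n)
   (if (i <= l <= j)%N then \prod_(i <= m < j.+1) y m * t l else 0))); last first.
  by move=> i _; rewrite exchange_big_nat.
rewrite exchange_big_nat; apply: eq_big_nat => l /andP [_ hl].
rewrite -(Gsum hl) mulrC mulr_suml; apply: eq_bigr => i _.
rewrite mulr_suml; apply: eq_bigr => j _.
by case: ifP; rewrite ?mul0r.
Qed.
End Traj.

Definition fnN (R : realFieldType) n (X : nat -> R) :=
  \sum_(0 <= k < n) X k + \sum_(0 <= i < n) \sum_(i <= j < n) \prod_(i <= l < j.+1) (X l)^-1.
End A.
Import A.

Module B.
Set Implicit Arguments. Unset Strict Implicit.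
Section Low.
Variable R : realType.
Variable n : nat.
Variables p u : nat -> R.
Hypothesis hu0 : u 0%N = 0.
Hypothesis hrec : forall j, (j < n)%N -> u j.+1 = (p j)^-1 /\ p j.+1 = p j ^+ 2 * (u j + 1) - 1.
Hypothesis hpn : p n = 0.
Hypothesis hpos : forall j, (j < n)%N -> 0 < p j.

Let xs := xs p u.
Let y := y p u.
Let xs_pos := xs_pos hu0 hrec hpos.

Lemma fnN_xs : fnN n xs = \sum_(0 <= k < n) xs k + \sum_(0 <= i < n) p i.
Proof.
rewrite /fnN; congr (_ + _); apply: eq_big_nat => i /andP [_ hi].
by rewrite -(Tsum hu0 hrec hpn hpos (ltnW hi)).
Qed.

Definition tl (X : nat -> R) k := ln (X k / xs k).

Lemma lower (X : nat -> R) : (forall k, (k < n)%N -> 0 < X k) ->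
  let t := tl X in
  fnN n xs + \sum_(0 <= k < n) xs k * (expR (t k) - 1 - t k) <= fnN n X.
Proof.
move=> hX; rewrite /=; set t := tl X.
have eX k : (k < n)%N -> X k = xs k * expR (t k).
  move=> hk; rewrite /t lnK; last by rewrite posrE divr_gt0 ?hX ?xs_pos.
  by rewrite mulrC divfK // gt_eqF // xs_pos.
have eP i j : (j < n)%N -> \prod_(i <= l < j.+1) (X l)^-1 =
    (\prod_(i <= l < j.+1) y l) * expR (- \sum_(i <= l < j.+1) t l).
  move=> hj; rewrite -sumrN expR_sum -big_split /=.
  apply: eq_big_nat => l /andP [_ hl]; rewrite eX; last by lia.
  by rewrite invfM expRN.
have e1 : \sum_(0 <= k < n) X k = \sum_(0 <= k < n) xs k * expR (t k).
  by apply: eq_big_nat => k /andP [_ hk]; rewrite eX.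
have i1 : \sum_(0 <= i < n) \sum_(i <= j < n) \prod_(i <= l < j.+1) y l * (1 - \sum_(i <= l < j.+1) t l)
   <= \sum_(0 <= i < n) \sum_(i <= j < n) \prod_(i <= l < j.+1) (X l)^-1.
  apply: ler_sum_nat => i /andP [_ hi]; apply: ler_sum_nat => j /andP [_ hj].
  rewrite eP // ler_wpM2l //.
    rewrite big_seq; apply: prodr_ge0 => l; rewrite mem_index_iota => /andP [_ hl].
    by rewrite /y /A.y invr_ge0 ltW // xs_pos //; lia.
  exact: expR_ge1Dx.
have e2 : \sum_(0 <= i < n) \sum_(i <= j < n) \prod_(i <= l < j.+1) y l * (1 - \sum_(i <= l < j.+1) t l)
   = \sum_(0 <= i < n) \sum_(i <= j < n) \prod_(i <= l < j.+1) y l - \sum_(0 <= l < n) t l * xs l.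
  rewrite -(exch hu0 hrec hpn hpos t) -sumrB; apply: eq_bigr => i _.
  by rewrite -sumrB; apply: eq_bigr => j _; rewrite mulrBr mulr1.
have e3 : \sum_(0 <= k < n) xs k * (expR (t k) - 1 - t k) =
   \sum_(0 <= k < n) xs k * expR (t k) - \sum_(0 <= k < n) xs k - \sum_(0 <= l < n) t l * xs l.
  rewrite -!sumrB; apply: eq_bigr => k _; rewrite /=; ring.
rewrite /fnN e1 e3; move: i1; rewrite e2.
rewrite /xs /y /A.y; lra.
Qed.

Lemma term_ge0 (X : nat -> R) k : (k < n)%N -> 0 <= xs k * (expR (tl X k) - 1 - tl X k).
Proof.
move=> hk; apply: mulr_ge0; first exact: ltW (xs_pos hk).
by have h := expR_ge1Dx (tl X k); lra.
Qed.

Lemma min_xs (X : nat -> R) : (forall k, (k < n)%N -> 0 < X k) -> fnN n xs <= fnN n X.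
Proof.
move=> hX; apply: le_trans (lower hX); rewrite lerDl.
rewrite big_seq; apply: sumr_ge0 => k; rewrite mem_index_iota => /andP [_ hk].
exact: term_ge0.
Qed.

Lemma uniq_xs (X : nat -> R) : (forall k, (k < n)%N -> 0 < X k) ->
  fnN n X <= fnN n xs -> forall k, (k < n)%N -> X k = xs k.
Proof.
move=> hX hle k hk.
have hs : \sum_(k < n) xs k * (expR (tl X k) - 1 - tl X k) = 0.
  apply/eqP; rewrite eq_le; apply/andP; split; last first.
    by apply: sumr_ge0 => i _; exact: term_ge0.
  have h := lower hX; simpl in h; rewrite big_mkord in h; lra.
have h0 : xs k * (expR (tl X k) - 1 - tl X k) = 0.
  have hn : forall i : 'I_n, true -> 0 <= xs i * (expR (tl X i) - 1 - tl X i).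
    by move=> i _; exact: term_ge0.
  exact: (@psumr_eq0P _ _ xpredT (fun i : 'I_n => xs i * (expR (tl X i) - 1 - tl X i)) hn hs (Ordinal hk) isT).
have ht : tl X k = 0.
  apply/eqP; apply: contraT => hne.
  have := expR_gt1Dx hne; have := xs_pos hk => h1 h2.
  move: h0 => /eqP; rewrite mulf_eq0 gt_eqF //= => /eqP; lra.
have e : X k / xs k = 1.
  move: ht; rewrite /tl => /(congr1 expR); rewrite expR0 lnK //.
  by rewrite posrE divr_gt0 ?hX ?xs_pos.
have hx : xs k != 0 by rewrite gt_eqF // xs_pos.
by rewrite -[LHS](divfK hx) e mul1r.
Qed.
End Low.
End B.
Import B.

Module C.
Set Implicit Arguments. Unset Strict Implicit.
Section Sym.
Variable R : realType.
Variable n : nat.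
Variables p u : nat -> R.
Hypothesis hu0 : u 0%N = 0.
Hypothesis hrec : forall j, (j < n)%N -> u j.+1 = (p j)^-1 /\ p j.+1 = p j ^+ 2 * (u j + 1) - 1.
Hypothesis hpn : p n = 0.
Hypothesis hpos : forall j, (j < n)%N -> 0 < p j.

Let p' j := u (n - j)%N.
Let u' j := p (n - j)%N.

Lemma hu0' : u' 0%N = 0.
Proof. by rewrite /u' subn0. Qed.

Lemma hpn' : p' n = 0.
Proof. by rewrite /p' subnn. Qed.

Lemma hpos' j : (j < n)%N -> 0 < p' j.
Proof.
move=> hj; rewrite /p' (_ : (n - j)%N = (n - j.+1).+1); last by lia.
rewrite (hrec _).1; last by lia.
by rewrite invr_gt0 hpos //; lia.
Qed.

Lemma hrec' j : (j < n)%N -> u' j.+1 = (p' j)^-1 /\ p' j.+1 = p' j ^+ 2 * (u' j + 1) - 1.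
Proof.
move=> hj; rewrite /p' /u' (_ : (n - j)%N = (n - j.+1).+1); last by lia.
have hm : (n - j.+1 < n)%N by lia.
have [h1 h2] := hrec hm; have h3 := hpos hm.
split; first by rewrite h1 invrK.
rewrite h1 h2; field; rewrite gt_eqF //.
Qed.

Lemma sym j : (j <= n)%N -> u j = p (n - j)%N.
Proof.
have hxs : forall k, (k < n)%N -> xs p' u' k = xs p u k.
  move=> k hk.
  apply: (uniq_xs hu0 hrec hpn hpos).
  - by move=> i hi; apply: (xs_pos hu0' hrec' hpos').
  - apply: (min_xs hu0' hrec' hpn' hpos') => i hi; exact: (xs_pos hu0 hrec hpos).
  - exact: hk.
elim: j => [|j IH] hj; first by rewrite hu0 subn0 hpn.
rewrite (u_next hu0 hrec hpos) // IH; last by lia.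
rewrite -hxs //.
have := u_next hu0' hrec' hpos' hj.
rewrite /u' => <-; congr p; lia.
Qed.

Lemma invar m : (m <= n)%N ->
  \sum_(0 <= k < m) (2 * u k - 3 * u k.+1 + p k) = p m * u m - 2 * u m.
Proof.
elim: m => [|m IH] hm; first by rewrite big_geq // hu0; ring.
rewrite big_nat_recr //= IH; last by lia.
have [h1 h2] := hrec hm; have h3 := hpos hm.
rewrite h1 h2; field; rewrite gt_eqF //.
Qed.

Lemma rev_sum (F : nat -> R) K : (K <= n)%N ->
  \sum_(n - K <= k < n) F k = \sum_(0 <= k < K) F (n - 1 - k)%N.
Proof.
elim: K => [|K IH] hK; first by rewrite subn0 !big_geq.
rewrite big_nat_recr //= -IH; last by lia.
rewrite (big_ltn (m := (n - K.+1)%N)); last by lia.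
rewrite addrC (_ : (n - K.+1).+1 = n - K)%N; last by lia.
by rewrite (_ : (n - 1 - K)%N = (n - K.+1)%N); last lia.
Qed.

Lemma final :
  3 * n%:R - (\sum_(0 <= k < n) xs p u k + \sum_(0 <= k < n) p k) =
  2 * (\sum_(0 <= j < n./2) (3 - p j + u j - 2 * u j.+1 - p j * u j)) + (1 - (p n./2 - 1) ^+ 2).
Proof.
set K := n./2.
have hK : (K <= n)%N by rewrite /K; lia.
set h := fun k => 3 - xs p u k - p k.
have e0 : 3 * n%:R - (\sum_(0 <= k < n) xs p u k + \sum_(0 <= k < n) p k) = \sum_(0 <= k < n) h k.
  rewrite /h !sumrB sumr_const_nat subn0; rewrite -mulr_natr; ring.
have e1 : \sum_(0 <= k < n) h k = \sum_(0 <= k < K) h k + \sum_(K <= k < n - K) h k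
   + \sum_(0 <= k < K) (3 - xs p u k - u k.+1).
  rewrite (@big_cat_nat _ _ _ K 0 n) //= (@big_cat_nat _ _ _ (n - K) K n) /=; [|lia|lia].
  rewrite addrA rev_sum //; congr (_ + _); apply: eq_big_nat => k /andP [_ hk].
  have hkn : (k < n)%N by lia.
  rewrite /h (_ : p (n - 1 - k)%N = u k.+1); last by rewrite sym; [congr p; lia|lia].
  congr (_ - _ - _).
  rewrite /xs (_ : u (n - 1 - k)%N = p k.+1); last by rewrite sym; [congr p; lia|lia].
  rewrite (_ : p (n - 1 - k)%N = u k.+1); last by rewrite sym; [congr p; lia|lia].
  have [h1 h2] := hrec hkn; have h3 := hpos hkn.
  rewrite h1 h2; field; rewrite gt_eqF //.
have e2 : 2 * (\sum_(0 <= j < K) (3 - p j + u j - 2 * u j.+1 - p j * u j))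
   - \sum_(0 <= k < K) h k - \sum_(0 <= k < K) (3 - xs p u k - u k.+1) = p K * u K - 2 * u K.
  rewrite -invar // mulr_sumr -!sumrB; apply: eq_bigr => k _; rewrite /h /xs; ring.
rewrite e0 e1.
have ho := odd_double_half n.
case hodd : (odd n) ho => /= ho.
- have hKn : (K < n)%N by rewrite /K; lia.
  rewrite (_ : (n - K)%N = K.+1); last by rewrite /K; lia.
  rewrite big_nat1.
  have hsK : u K.+1 = p K by rewrite sym; [congr p; rewrite /K; lia|rewrite /K; lia].
  have [h1 h2] := hrec hKn; have h3 := hpos hKn.
  have hp1 : p K = 1.
    move: hsK; rewrite h1 => /(congr1 (fun z => z * p K)); rewrite mulVf ?gt_eqF // => hh.
    nra.
  move: e2; rewrite /h /xs hp1 => e2; lra.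
- rewrite (_ : (n - K)%N = K); last by rewrite /K; lia.
  rewrite [\sum_(K <= k < K) _]big_geq // addr0.
  have hsK : u K = p K by rewrite sym; [congr p; rewrite /K; lia|rewrite /K; lia].
  have hq : (p K - 1) ^+ 2 = p K * p K - 2 * p K + 1 by ring.
  move: e2; rewrite hsK hq => e2; lra.
Qed.
End Sym.
End C.
Import C.

Module D.
Set Implicit Arguments. Unset Strict Implicit.
Lemma big_mid (T : Type) (idx : T) (op : Monoid.law idx) (F : nat -> T) n a b :
  (a <= b)%N -> (b <= n)%N ->
  \big[op/idx]_(0 <= i < n | ((a <= i) && (i < b))%N) F i = \big[op/idx]_(a <= i < b) F i.
Proof.
move=> hab hb; rewrite big_mkcond (@big_cat_nat _ _ _ b 0 n) //= (@big_cat_nat _ _ _ a 0 b) //=.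
rewrite big1_seq ?Monoid.simpm; last first.
  by move=> i /andP [_]; rewrite mem_index_iota => /andP [_ hi]; rewrite leqNgt hi.
rewrite [X in op _ X]big1_seq ?Monoid.simpm; last first.
  by move=> i /andP [_]; rewrite mem_index_iota => /andP [hi _]; rewrite ltnNge hi andbF.
by apply: eq_big_nat => i /andP [-> ->].
Qed.

Lemma fnN_ext (R : realFieldType) n (X X' : nat -> R) : (forall k, (k < n)%N -> X k = X' k) ->
  fnN n X = fnN n X'.
Proof.
move=> h; rewrite /fnN; congr (_ + _).
  by apply: eq_big_nat => k /andP [_ hk]; rewrite h.
apply: eq_big_nat => i /andP [_ hi]; apply: eq_big_nat => j /andP [hij hj].
by apply: eq_big_nat => l /andP [_ hl]; rewrite h //; lia.
Qed.

Lemma fn_fnN (R : realType) n (x : 'I_n.+1 -> R) :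
  fn x = fnN n.+1 (fun l => x (inord l)).
Proof.
rewrite /fn /fnN; congr (_ + _).
  by rewrite big_mkord; apply: eq_bigr => i _; rewrite inord_val.
rewrite big_mkord; apply: eq_bigr => i _.
have hp : forall j : 'I_n.+1, (i <= j)%N ->
    \prod_(k < n.+1 | (i <= k <= j)%N) (x k)^-1 = \prod_(i <= l < j.+1) (x (inord l))^-1.
  move=> j hij.
  rewrite -(big_mid _ _ (leqW hij) (ltn_ord j)) big_mkord.
  apply: eq_big => k; first by rewrite ltnS.
  by move=> _; rewrite inord_val.
rewrite (eq_bigr (fun j : 'I_n.+1 => \prod_(i <= l < j.+1) (x (inord l))^-1)); last first.
  by move=> j hij; rewrite hp.
rewrite -(big_mid _ _ (ltnW (ltn_ord i)) (leqnn n.+1)) big_mkord.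
apply: eq_bigl => j; by rewrite ltn_ord andbT.
Qed.

End D.
Import D.

Theorem lemma12 (R : realType) (n : nat) (T : nat -> R * R) :
  (1 <= n)%N -> is_trajectory n T ->
  let p := fun j => (T j).1 in
  let u := fun j => (T j).2 in
  let lam := fun j => 1 - u j in
  let k := n./2 in
  let delta := 1 - (p k - 1) ^+ 2 in
  Cn R n = 2 * (\sum_(0 <= j < k) (3 - p j + u j - 2 * u j.+1 - p j * u j)) + delta
  /\ 2 * (\sum_(0 <= j < k) (3 - p j + u j - 2 * u j.+1 - p j * u j)) + delta
     = 2 * (\sum_(1 <= j < k.+1) (lam j * (lam j.-1 - 2 * lam j) / u j)) + delta.
Proof.
move=> hn [h0 hstep hpn hpos] p u lam k delta.
have hu0 : u 0%N = 0 by [].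
have hpn' : p n = 0 by [].
have hpos' : forall j, (j < n)%N -> 0 < p j by [].
have hrec : forall j, (j < n)%N -> u j.+1 = (p j)^-1 /\ p j.+1 = p j ^+ 2 * (u j + 1) - 1.
  move=> j hj; have [_ e] := hstep j.+1 ltac:(lia).
  by rewrite /u /p e /Phi /= div1r.
have hinf : An R n = fnN n (xs p u).
  have [n' en] : exists n', n = n'.+1 by exists n.-1; lia.
  have hxs : forall i : 'I_n, 0 < xs p u i by move=> i; exact: (xs_pos hu0 hrec hpos').
  rewrite /An; set E := (X in inf X).
  have hE : E (fnN n (xs p u)).
    exists (fun i : 'I_n => xs p u i) => //.
    move: hxs hrec hpos'; clear -en; subst n => hxs hrec hpos'.
    rewrite fn_fnN; apply: fnN_ext => l hl; by rewrite inordK.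
  have hlb : lbound E (fnN n (xs p u)).
    move=> z [x hx <-]; move: hx hrec hpos' hpn'; clear -en hu0; subst n => hx hrec hpos' hpn'.
    rewrite fn_fnN; apply: (min_xs hu0 hrec hpn' hpos') => l _; exact: hx.
  apply/eqP; rewrite eq_le; apply/andP; split.
    by apply: ge_inf => //; exists (fnN n (xs p u)).
  by apply: lb_le_inf => //; exists (fnN n (xs p u)).
have e1 : Cn R n = 2 * (\sum_(0 <= j < k) (3 - p j + u j - 2 * u j.+1 - p j * u j)) + delta.
  rewrite /Cn hinf (fnN_xs hu0 hrec hpn' hpos').
  exact: (final hu0 hrec hpn' hpos').
split => //; congr (2 * _ + _).
rewrite big_add1 /=; apply: eq_big_nat => j /andP [_ hj].
have hjn : (j < n)%N by rewrite /k in hj; lia.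
have [h1 h2] := hrec j hjn; have h3 := hpos' j hjn.
rewrite /lam h1; field; rewrite gt_eqF //.
Qed.
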